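(* Fix $\beta>1$. Let $(D_n)_{n\geq1}$ be a sequence of non-empty finite sets of generalised $\beta$-digits, and suppose that both the lengths and the subdigits of all generalised digits appearing in the sets $D_n$ are bounded. Identifying each generalised digit with its value, let $\ell_n$ and $u_n$ be the least and greatest elements of $D_n$, $\Delta_n=u_n-\ell_n$, and let $\delta_n$ be the largest gap between consecutive elements of $D_n$ (with $\delta_n=0$ if $|D_n|=1$). If for every $n\geq1$ $$\delta_n\leq\sum_{i=1}^{\infty}\Delta_{n+i}\,\beta^{-i},$$ then $$\Big\{\sum_{n=1}^\infty a_n\beta^{-n} : a_n\in D_n \text{ for all } n\Big\}=\Big[\sum_{n=1}^\infty \ell_n\beta^{-n},\ \sum_{n=1}^\infty u_n\beta^{-n}\Big].$$
   Context: A generalised $\beta$-digit of length $k+1$ is a string $c_0.c_1\ldots c_k$ of non-negative integers $c_0,\dots,c_k$ (its subdigits); its value is $\sum_{i=0}^k c_i\beta^{-i}$, which depends on $\beta$. Least/greatest elements and gaps are taken with respect to these values. *)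

(* Defs.v *)
From HB Require Import structures.
From mathcomp Require Import all_boot all_order all_algebra.
From mathcomp Require Import all_classical all_reals all_analysis.
Set Implicit Arguments. Unset Strict Implicit. Unset Printing Implicit Defensive.
Import Order.TTheory GRing.Theory Num.Theory.
Local Open Scope ring_scope.

(* A generalised beta-digit c_0.c_1...c_k is the sequence [:: c_0; ...; c_k]
   of its subdigits (non-empty); its value is sum_i c_i beta^-i. *)
Definition gdigit_val (R : realType) (beta : R) (d : seq nat) : R :=
  \sum_(i < size d) (nth 0%N d i)%:R * beta ^- i.

Definition seq_min (R : realType) (s : seq R) : R :=
  \big[Num.min/head 0 s]_(x <- s) x.
Definition seq_max (R : realType) (s : seq R) : R :=
  \big[Num.max/head 0 s]_(x <- s) x.

Definition seq_gap (R : realType) (s : seq R) : R :=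
  \big[Num.max/0]_(x <- s)
    \big[Num.max/0]_(y <- s | (x < y) && ~~ has (fun z => (x < z) && (z < y)) s)
      (y - x).

(* Main.v *)
Require Import Defs.
From HB Require Import structures.
From mathcomp Require Import all_boot all_order all_algebra.
From mathcomp Require Import all_classical all_reals all_analysis.
From mathcomp Require Import ring lra.
Import numFieldNormedType.Exports.
Import Order.TTheory GRing.Theory Num.Theory.
Local Open Scope ring_scope.
Local Open Scope classical_set_scope.

Lemma bigmin_le_mem {R : realType} (s : seq R) idx z :
  z \in s -> \big[Num.min/idx]_(x <- s) x <= z.
Proof.
elim: s => [|h t IH] //; rewrite in_cons big_cons => /orP[/eqP->|zt].
  by rewrite ge_min lexx.
by rewrite ge_min IH ?orbT.
Qed.

Lemma bigmax_ge_mem {R : realType} (s : seq R) idx z :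
  z \in s -> z <= \big[Num.max/idx]_(x <- s) x.
Proof.
elim: s => [|h t IH] //; rewrite in_cons big_cons => /orP[/eqP->|zt].
  by rewrite le_max lexx.
by rewrite le_max IH ?orbT.
Qed.

Lemma bigmin_in {R : realType} (s : seq R) idx :
  \big[Num.min/idx]_(x <- s) x \in idx :: s.
Proof.
elim: s => [|h t IH]; first by rewrite big_nil mem_head.
rewrite big_cons minEle; case: ifP => H.
- rewrite !in_cons eqxx orbT //.
- move: IH; rewrite !in_cons => /orP[->|->]; by rewrite ?orbT.
Qed.

Lemma bigmax_in {R : realType} (s : seq R) idx :
  \big[Num.max/idx]_(x <- s) x \in idx :: s.
Proof.
elim: s => [|h t IH]; first by rewrite big_nil mem_head.
rewrite big_cons maxEle; case: ifP => H.
- move: IH; rewrite !in_cons => /orP[->|->]; by rewrite ?orbT.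
- rewrite !in_cons eqxx orbT //.
Qed.

Lemma seq_min_le {R : realType} (s : seq R) z : z \in s -> seq_min s <= z.
Proof. exact: bigmin_le_mem. Qed.
Lemma seq_max_ge {R : realType} (s : seq R) z : z \in s -> z <= seq_max s.
Proof. exact: bigmax_ge_mem. Qed.
Lemma seq_min_in {R : realType} (s : seq R) : s != [::] -> seq_min s \in s.
Proof.
case: s => // h t _; have := bigmin_in (h :: t) h.
by rewrite /seq_min /= in_cons => /orP[/eqP->|]//; rewrite mem_head.
Qed.
Lemma seq_max_in {R : realType} (s : seq R) : s != [::] -> seq_max s \in s.
Proof.
case: s => // h t _; have := bigmax_in (h :: t) h.
by rewrite /seq_max /= in_cons => /orP[/eqP->|]//; rewrite mem_head.
Qed.

Lemma seq_gap_ge0 {R : realType} (s : seq R) : 0 <= seq_gap s.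
Proof.
have hm : forall x y : R, 0 <= x -> 0 <= y -> 0 <= Num.max x y.
  by move=> x y hx _; rewrite le_max hx.
rewrite /seq_gap; apply: (big_ind (fun x => 0 <= x)) => // i _.
apply: (big_ind (fun x => 0 <= x)) => // j /andP[/ltW h _].
by rewrite subr_ge0.
Qed.

Lemma le_bigmaxF {R : realType} (s : seq R) (P : pred R) (F : R -> R) z :
  z \in s -> P z -> F z <= \big[Num.max/0]_(x <- s | P x) F x.
Proof.
elim: s => // h t IH; rewrite in_cons big_cons => /orP[/eqP->|zt] Pz.
  by rewrite Pz le_max lexx.
case: ifP => _; last exact: IH.
by rewrite le_max IH ?orbT.
Qed.

Lemma seq_gap_ge {R : realType} (s : seq R) a b : a \in s -> b \in s -> a < b ->
  ~~ has (fun z => (a < z) && (z < b)) s -> b - a <= seq_gap s.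
Proof.
move=> ains bins ab nh; rewrite /seq_gap.
apply: le_trans (le_bigmaxF _ predT (fun x => \big[Num.max/0]_(y <- s | (x < y) && ~~ has (fun z => (x < z) && (z < y)) s) (y - x)) a ains _) => //.
by apply: (le_bigmaxF _ _ (fun y => y - a)) => //; rewrite ab nh.
Qed.

Lemma pick_digit {R : realType} (s : seq R) y w : s != [::] -> seq_min s <= y ->
  y <= seq_max s + w -> seq_gap s <= w -> exists2 a, a \in s & a <= y <= a + w.
Proof.
move=> sne hlo hhi hg.
have w0 : 0 <= w := le_trans (seq_gap_ge0 s) hg.
set f := [seq z <- s | z <= y].
have fne : f != [::].
  rewrite -has_filter; apply/hasP; exists (seq_min s) => //; exact: seq_min_in.
have := seq_max_in _ fne; rewrite mem_filter => /andP[ay ains].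
exists (seq_max f) => //; rewrite ay /=.
rewrite leNgt; apply/negP => ywa.
set g := [seq z <- s | seq_max f < z].
have gne : g != [::].
  rewrite -has_filter; apply/hasP; exists (seq_max s); first exact: seq_max_in.
  by rewrite -(ltrD2r w) (lt_le_trans ywa).
have := seq_min_in _ gne; rewrite mem_filter => /andP[ab bins].
have by_ : y < seq_min g.
  rewrite ltNge; apply/negP => bley.
  have : seq_min g <= seq_max f by apply: seq_max_ge; rewrite mem_filter bley.
  by rewrite leNgt ab.
have : seq_min g - seq_max f <= seq_gap s.
  apply: seq_gap_ge => //; apply/hasPn => z zs; apply/negP => /andP[az zb].
  have : seq_min g <= z by apply: seq_min_le; rewrite mem_filter az.
  by rewrite leNgt zb.
rewrite lerBlDl => hb.
have h2 : seq_max f + seq_gap s <= seq_max f + w by rewrite lerD2l.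
have := lt_le_trans by_ (le_trans hb h2).
by rewrite ltNge (ltW ywa).
Qed.

Definition ps {R : realType} (beta : R) (c : nat -> R) (N : nat) : R :=
  \sum_(1 <= k < N) c k * beta ^- k.

Lemma psS {R : realType} (beta : R) (c : nat -> R) N : (1 <= N)%N ->
  ps beta c N.+1 = ps beta c N + c N * beta ^- N.
Proof. by move=> h; rewrite /ps big_nat_recr. Qed.

Lemma geo_sum {R : realType} (beta : R) N : 1 < beta ->
  (beta - 1) * \sum_(1 <= k < N.+1) beta ^- k = 1 - beta ^- N.
Proof.
move=> hb; have b0 : beta != 0 by rewrite gt_eqF // (lt_trans ltr01).
elim: N => [|N IH]; first by rewrite big_geq // expr0 invr1 mulr0 subrr.
rewrite big_nat_recr //= mulrDr IH exprSr invfM.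
field.
by rewrite expf_neq0 // andbT.
Qed.

Lemma ps_nd {R : realType} (beta : R) (c : nat -> R) : 0 < beta -> (forall k, (1 <= k)%N -> 0 <= c k) ->
  nondecreasing_seq (ps beta c).
Proof.
move=> hb hc; apply/nondecreasing_seqP => n.
case: n => [|n]; first by rewrite /ps !big_geq.
by rewrite (psS _ _ n.+1) // lerDl mulr_ge0 ?hc // invr_ge0 exprn_ge0 // ltW.
Qed.

Lemma ps_bound {R : realType} (beta : R) (c : nat -> R) B : 1 < beta -> (forall k, (1 <= k)%N -> 0 <= c k <= B) ->
  forall N, ps beta c N <= B / (beta - 1).
Proof.
move=> hb hc N.
have b0 : 0 < beta := lt_trans ltr01 hb.
have b1 : 0 < beta - 1 by rewrite subr_gt0.
have B0 : 0 <= B by case/andP: (hc 1%N isT) => h1 h2; exact: le_trans h1 h2.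
case: N => [|N]; first by rewrite /ps big_geq // divr_ge0 // ltW.
apply: (@le_trans _ _ (B * \sum_(1 <= k < N.+1) beta ^- k)).
  rewrite /ps mulr_sumr; apply: ler_sum_nat => k /andP[k1 _]; rewrite ler_wpM2r //.
    by rewrite invr_ge0 exprn_ge0 // ltW.
  by case/andP: (hc k k1).
rewrite ler_pdivlMr // -mulrA [X in _ * X]mulrC geo_sum //.
by rewrite ler_piMr // gerBl invr_ge0 exprn_ge0 // (ltW b0).
Qed.

Lemma ps_cvg {R : realType} (beta : R) (c : nat -> R) B : 1 < beta -> (forall k, (1 <= k)%N -> 0 <= c k <= B) ->
  cvgn (ps beta c).
Proof.
move=> hb hc; apply: nondecreasing_is_cvgn.
  apply: ps_nd => [|k k1]; first exact: lt_trans ltr01 hb.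
  by case/andP: (hc k k1).
by exists (B / (beta - 1)) => _ [n _ <-]; exact: ps_bound.
Qed.

Lemma shift_ident {R : realType} (beta : R) (g : nat -> R) m N : beta != 0 ->
  \sum_(1 <= i < N.+1) g (m + i)%N * beta ^- i =
  beta ^+ m * (ps beta g (N + m.+1) - ps beta g m.+1).
Proof.
move=> b0; rewrite /ps [X in _ = _ * (X - _)](big_cat_nat _ (n := m.+1)) ?leq_addl //=.
rewrite [X in _ * X]addrC addKr -(add1n m) big_addn.
have -> : (N + (1 + m) - m = N.+1)%N by rewrite add1n addnS subSn ?leq_addl // addnK.
rewrite mulr_sumr; apply: eq_bigr => i _.
rewrite addnC exprD invfM.
field.
by rewrite !expf_neq0.
Qed.

Lemma shift_lim {R : realType} (beta : R) (g : nat -> R) m : 1 < beta ->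
  cvgn (ps beta g) ->
  limn (fun N => \sum_(1 <= i < N) g (m + i)%N * beta ^- i) =
  beta ^+ m * (limn (ps beta g) - ps beta g m.+1).
Proof.
move=> hb hc; have b0 : beta != 0 by rewrite gt_eqF // (lt_trans ltr01).
apply: cvg_lim => //.
rewrite -cvg_shiftS /=.
under eq_fun => N do rewrite shift_ident //.
apply: cvgM; first exact: cvg_cst.
apply: cvgB; last exact: cvg_cst.
by rewrite (cvg_shiftn m.+1 (ps beta g)).
Qed.

Lemma gval_bound {R : realType} (beta : R) (d : seq nat) L M : 1 < beta ->
  (size d <= L)%N -> all (fun c => c <= M)%N d ->
  0 <= gdigit_val beta d <= (L * M)%:R.
Proof.
move=> hb hL hM; have b0 : 0 < beta := lt_trans ltr01 hb.
apply/andP; split.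
  by apply: sumr_ge0 => i _; rewrite mulr_ge0 // invr_ge0 exprn_ge0 // ltW.
apply: (@le_trans _ _ (\sum_(i < size d) (M%:R : R))).
  apply: ler_sum => i _.
  rewrite -[X in _ <= X]mulr1 ler_pM //.
  - by rewrite invr_ge0 exprn_ge0 // ltW.
  - by rewrite ler_nat; apply: (allP hM); apply: mem_nth.
  - by rewrite invf_le1 ?exprn_gt0 // exprn_ege1 // ltW.
rewrite sumr_const card_ord.
have -> : (M%:R : R) *+ size d = (size d * M)%:R by rewrite natrM mulr_natl.
by rewrite ler_nat leq_mul2r hL orbT.
Qed.

Lemma step_lemma {R : realType} (s : seq R) (e x q TL TU TL' TU' : R) :
  0 < e -> s != [::] -> TL = seq_min s * e + TL' -> TU = seq_max s * e + TU' ->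
  seq_gap s * e <= TU' - TL' -> q + TL <= x -> x <= q + TU ->
  exists2 a, a \in s & (q + a * e + TL' <= x) && (x <= q + a * e + TU').
Proof.
move=> e0 sne hTL hTU hg hx1 hx2.
have ee : e != 0 by rewrite gt_eqF.
pose y := (x - q - TL') / e; pose w := (TU' - TL') / e.
have hy : y * e = x - q - TL' by rewrite divfK.
have hw : w * e = TU' - TL' by rewrite divfK.
have key (u v : R) : (u <= v) = (u * e <= v * e) by rewrite ler_pM2r.
have c1 : seq_min s <= y by rewrite key hy; lra.
have c2 : y <= seq_max s + w by rewrite key mulrDl hy hw; lra.
have c3 : seq_gap s <= w by rewrite key hw.
have [a ains /andP[h1 h2]] := pick_digit _ _ _ sne c1 c2 c3.
exists a => //; move: h1 h2; rewrite (key a) (key y) hy mulrDl hw => h1 h2.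
apply/andP; split; lra.
Qed.

Theorem lemma2p2 (R : realType) (beta : R) (D : nat -> seq (seq nat))
  (Hbeta : 1 < beta)
  (Hdig : forall n, (1 <= n)%N -> forall d, d \in D n -> size d != 0%N)
  (Hne : forall n, (1 <= n)%N -> D n != [::])
  (Hbd : exists L M : nat, forall n, (1 <= n)%N -> forall d, d \in D n ->
           (size d <= L)%N /\ all (fun c => c <= M)%N d)
  (Hgap : forall n, (1 <= n)%N ->
     seq_gap (map (gdigit_val beta) (D n)) <=
     \big[+%R/0]_(1 <= i <oo)
        ((seq_max (map (gdigit_val beta) (D (n + i)%N)) -
          seq_min (map (gdigit_val beta) (D (n + i)%N))) * beta ^- i)) :
  [set x | exists a : nat -> seq nat,
             (forall n, (1 <= n)%N -> a n \in D n) /\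
             x = \big[+%R/0]_(1 <= n <oo) (gdigit_val beta (a n) * beta ^- n)]
  = `[ \big[+%R/0]_(1 <= n <oo) (seq_min (map (gdigit_val beta) (D n)) * beta ^- n),
       \big[+%R/0]_(1 <= n <oo) (seq_max (map (gdigit_val beta) (D n)) * beta ^- n) ].
Proof.
have b0 : 0 < beta := lt_trans ltr01 Hbeta.
have bne : beta != 0 by rewrite gt_eqF.
have [L [M HLM]] := Hbd.
pose B : R := (L * M)%:R.
have hval n d : (1 <= n)%N -> d \in D n -> 0 <= gdigit_val beta d <= B.
  move=> n1 dD; have [h1 h2] := HLM n n1 d dD; exact: gval_bound.
pose lo n := seq_min (map (gdigit_val beta) (D n)).
pose hi n := seq_max (map (gdigit_val beta) (D n)).
have mne n : (1 <= n)%N -> map (gdigit_val beta) (D n) != [::].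
  by move=> n1; rewrite -size_eq0 size_map size_eq0 Hne.
have lohi n d : (1 <= n)%N -> d \in D n -> lo n <= gdigit_val beta d <= hi n.
  move=> n1 dD; apply/andP; split; [apply: seq_min_le | apply: seq_max_ge]; exact: map_f.
have blo n : (1 <= n)%N -> 0 <= lo n <= B.
  move=> n1; have /mapP[d dD e] := seq_min_in _ (mne n n1); rewrite /lo e; exact: hval dD.
have bhi n : (1 <= n)%N -> 0 <= hi n <= B.
  move=> n1; have /mapP[d dD e] := seq_max_in _ (mne n n1); rewrite /hi e; exact: hval dD.
have cL := ps_cvg beta lo B Hbeta blo.
have cU := ps_cvg beta hi B Hbeta bhi.
pose SL := limn (ps beta lo). pose SU := limn (ps beta hi).
apply/seteqP; split => x /=.
  move=> [a [ha ->]].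
  have ca := ps_cvg beta (fun n => gdigit_val beta (a n)) B Hbeta
    (fun n n1 => hval n (a n) n1 (ha n n1)).
  rewrite in_itv /=; apply/andP; split; apply: ler_lim => //;
    apply: nearW => N; apply: ler_sum_nat => k /andP[k1 _];
    rewrite ler_pM2r ?invr_gt0 ?exprn_gt0 //;
    by case/andP: (lohi k (a k) k1 (ha k k1)).
rewrite in_itv /= => /andP[hx1 hx2].
have {hx1}hx1 : SL <= x := hx1. have {hx2}hx2 : x <= SU := hx2.
pose TL m := SL - ps beta lo m.+1. pose TU m := SU - ps beta hi m.+1.
pose inv m q := (q + TL m <= x) && (x <= q + TU m).
pose g k := hi k - lo k.
have hpg : ps beta g = (fun N => ps beta hi N - ps beta lo N).
  apply: funext => N; rewrite /ps -sumrB; apply: eq_bigr => k _; rewrite /g mulrBl.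
  done.
have cg : cvgn (ps beta g) by rewrite hpg; apply: is_cvgB.
have lg : limn (ps beta g) = SU - SL by rewrite hpg limB.
have step m q : inv m q ->
    exists d, d \in D m.+1 /\ inv m.+1 (q + gdigit_val beta d * beta ^- m.+1).
  move=> /andP[h1 h2].
  have e0 : 0 < beta ^- m.+1 by rewrite invr_gt0 exprn_gt0.
  have hg := Hgap m.+1 isT.
  change (is_true (seq_gap (map (gdigit_val beta) (D m.+1)) <=
    limn (fun N => \sum_(1 <= i < N) g (m.+1 + i)%N * beta ^- i))) in hg.
  rewrite shift_lim // lg hpg in hg.
  have gapb : seq_gap (map (gdigit_val beta) (D m.+1)) * beta ^- m.+1 <= TU m.+1 - TL m.+1.
    rewrite -(ler_pM2r e0) in hg; apply: (le_trans hg).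
    rewrite mulrC mulrA mulVf ?expf_neq0 // mul1r /TU /TL; lra.
  have hTL : TL m = lo m.+1 * beta ^- m.+1 + TL m.+1.
    by rewrite /TL (psS _ _ m.+1) //; ring.
  have hTU : TU m = hi m.+1 * beta ^- m.+1 + TU m.+1.
    by rewrite /TU (psS _ _ m.+1) //; ring.
  have [v vin hv] := step_lemma _ _ _ _ _ _ _ _ e0 (mne m.+1 isT) hTL hTU gapb h1 h2.
  move/mapP: vin => [d dD ev]; exists d; split => //.
  by rewrite /inv -ev.
pose ch m q : seq nat :=
  match pselect (exists d, d \in D m.+1 /\ inv m.+1 (q + gdigit_val beta d * beta ^- m.+1)) with
  | left H => proj1_sig (cid H) | right _ => [::] end.
have chP m q : inv m q -> ch m q \in D m.+1 /\
    inv m.+1 (q + gdigit_val beta (ch m q) * beta ^- m.+1).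
  move=> h; rewrite /ch; case: pselect => [H|H]; last by exfalso; apply: H; exact: step.
  exact: (proj2_sig (cid H)).
pose P := fix P n := if n is k.+1 then P k + gdigit_val beta (ch k (P k)) * beta ^- k.+1 else 0.
have Pinv n : inv n (P n).
  elim: n => [|n IH]; last exact: (chP n _ IH).2.
  by rewrite /inv /TL /TU /ps /= !big_geq // !subr0 !add0r hx1 hx2.
pose a n := ch n.-1 (P n.-1).
have aD n : (1 <= n)%N -> a n \in D n.
  by case: n => // n _; exact: (chP n _ (Pinv n)).1.
have psa n : ps beta (fun k => gdigit_val beta (a k)) n.+1 = P n.
  elim: n => [|n IH]; first by rewrite /ps big_geq.
  by rewrite psS // IH.
have cTL : TL n @[n --> \oo] --> 0.
  have h : (fun n => ps beta lo n.+1) @ \oo --> SL by rewrite cvg_shiftS; exact: cL.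
  by rewrite -(subrr SL); exact: (cvgB (cvg_cst SL) h).
have cTU : TU n @[n --> \oo] --> 0.
  have h : (fun n => ps beta hi n.+1) @ \oo --> SU by rewrite cvg_shiftS; exact: cU.
  by rewrite -(subrr SU); exact: (cvgB (cvg_cst SU) h).
have cd : (x - P n) @[n --> \oo] --> 0.
  apply: (squeeze_cvgr _ cTL cTU); apply: nearW => n.
  by have /andP[h1 h2] := Pinv n; apply/andP; split; lra.
have cP : P n @[n --> \oo] --> x.
  have := cvgB (cvg_cst x) cd; rewrite subr0 => H.
  suff -> : (fun n => P n) = (fun n => x - (x - P n)) by exact: H.
  by apply: funext => n; rewrite opprB addrC subrK.
exists a; split => //.
have hs : ps beta (fun k => gdigit_val beta (a k)) n.+1 @[n --> \oo] --> x.
  suff -> : (fun n => ps beta (fun k => gdigit_val beta (a k)) n.+1) = (fun n => P n) by exact: cP.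
  by apply: funext => n; rewrite psa.
rewrite cvg_shiftS in hs.
symmetry; apply: cvg_lim => //; exact: hs.
Qed.
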